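(* The total wave-fluid potential vorticity obeys $$(\partial_t+\mathcal{L}_{\widehat{\mathbf{v}}})\Big(\mathrm{curl}\,\widehat{\mathbf{v}}+\nabla\widetilde{w}\times\nabla\zeta\Big)\cdot d\mathbf{S}=-\nabla\rho^{-1}\times\nabla p\cdot d\mathbf{S}.$$ Introducing a stream function $\psi$ with $\widehat{\mathbf{v}}=\widehat{\mathbf{z}}\times\nabla\psi$, the 2D Laplacian $\Delta$ and the Jacobian $J(a,b):=\widehat{\mathbf{z}}\cdot\nabla a\times\nabla b$, this reads $$\partial_tq+J(\psi,q)=-J(\rho^{-1},\nabla p),\qquad q:=\Delta\psi+J(\widetilde{w},\zeta).$$
   Context: On a free surface $z=\zeta(\mathbf{x},t)$ over horizontal coordinates $\mathbf{x}=(x,y)$, the WCIFS (wave-current interaction on a free surface) equations govern the horizontal velocity $\widehat{\mathbf{v}}$, areal density $D$ (constrained to $D=1$ by the pressure $p$, so $\mathrm{div}\,\widehat{\mathbf{v}}=0$), buoyancy $\rho$, elevation $\zeta$ and vertical velocity $\widehat{w}$: $(\partial_t+\mathcal{L}_{\widehat{\mathbf{v}}})(\widehat{\mathbf{v}}\cdot d\mathbf{x}+\widetilde{w}\,d\zeta)=d\varpi-\frac1\rho dp$; $\partial_tD+\mathrm{div}(D\widehat{\mathbf{v}})=0$; $\partial_t\rho+\widehat{\mathbf{v}}\cdot\nabla\rho=0$; $\partial_t\zeta+\widehat{\mathbf{v}}\cdot\nabla\zeta=\widehat{w}(1+\epsilon|\nabla\zeta|^2)$; $\partial_t\widetilde{w}+\widehat{\mathbf{v}}\cdot\nabla\widetilde{w}=-g+\frac{2\epsilon}{D\rho}\mathrm{div}(\widehat{w}\,\widetilde{\mu}\,\nabla\zeta)$,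 with $\varpi=\tfrac12(|\widehat{\mathbf{v}}|^2+\widehat{w}^2)-g\zeta$, $\widetilde{\mu}=D\rho\widetilde{w}$, $\widetilde{w}=\widehat{w}/(1+\epsilon|\nabla\zeta|^2)$. $\mathcal{L}_{\widehat{\mathbf{v}}}$ is the Lie derivative along $\widehat{\mathbf{v}}$. *)

(* Defs.v *)
From Stdlib Require Import Reals List.
From Coquelicot Require Import Coquelicot.
Open Scope R_scope.

(* A (time-dependent) scalar field on the horizontal plane: f t x y. *)
Definition field := R -> R -> R -> R.

Definition dt (f : field) : field := fun t x y => Derive (fun s => f s x y) t.
Definition dx (f : field) : field := fun t x y => Derive (fun s => f t s y) x.
Definition dy (f : field) : field := fun t x y => Derive (fun s => f t x s) y.

Definition partial (i : nat) (f : field) : field :=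
  match i with 0 => dt f | 1 => dx f | _ => dy f end.

Definition smooth (f : field) : Prop :=
  forall (l : list nat) (t x y : R),
    let g := fold_right partial f l in
    ex_derive (fun s => g s x y) t /\ ex_derive (fun s => g t s y) x /\
    ex_derive (fun s => g t x s) y /\
    continuous (fun z : R * R * R => g (fst (fst z)) (snd (fst z)) (snd z)) (t, x, y).

Definition fadd (f g : field) : field := fun t x y => f t x y + g t x y.
Definition fmul (f g : field) : field := fun t x y => f t x y * g t x y.

(* z-component of grad a x grad b, i.e. the Jacobian J(a,b) = zhat . grad a x grad b. *)
Definition jac (a b : field) : field :=
  fun t x y => dx a t x y * dy b t x y - dy a t x y * dx b t x y.

Definition curl2 (v1 v2 : field) : field := fun t x y => dx v2 t x y - dy v1 t x y.

Definition div2 (v1 v2 : field) : field := fun t x y => dx v1 t x y + dy v2 t x y.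

Definition lap (f : field) : field := fun t x y => dx (dx f) t x y + dy (dy f) t x y.

(* Lie derivative of the 1-form  a1 dx + a2 dy  along (v1,v2), in coordinates:
   (L_v a)_i = v^j d_j a_i + a_j d_i v^j.  Components i = 1 (dx) and 2 (dy). *)
Definition lie1_x (v1 v2 a1 a2 : field) : field :=
  fun t x y => v1 t x y * dx a1 t x y + v2 t x y * dy a1 t x y
             + a1 t x y * dx v1 t x y + a2 t x y * dx v2 t x y.
Definition lie1_y (v1 v2 a1 a2 : field) : field :=
  fun t x y => v1 t x y * dx a2 t x y + v2 t x y * dy a2 t x y
             + a1 t x y * dy v1 t x y + a2 t x y * dy v2 t x y.

(* Lie derivative of the 2-form  w dS = w dx/\dy  along (v1,v2): coefficient of dS,
   L_v (w dS) = div(w v) dS. *)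
Definition lie2 (v1 v2 w : field) : field :=
  fun t x y => dx (fmul w v1) t x y + dy (fmul w v2) t x y.

(* Main.v *)
Require Import Defs.
From Stdlib Require Import Reals List Lra FunctionalExtensionality.
From Coquelicot Require Import Coquelicot.
Open Scope R_scope.

Definition fsub (f g : field) : field := fun t x y => f t x y - g t x y.
Definition fopp (f : field) : field := fun t x y => - f t x y.
Definition fconst (c : R) : field := fun _ _ _ => c.
Definition finv (f : field) : field := fun t x y => / f t x y.

Lemma fext (f g : field) : (forall t x y, f t x y = g t x y) -> f = g.
Proof. intros H. do 3 (apply functional_extensionality; intro). apply H. Qed.

Definition cont (f : field) : Prop := forall t x y,
  continuous (fun z : R * R * R => f (fst (fst z)) (snd (fst z)) (snd z)) (t, x, y).

Definition exp_ (i : nat) (f : field) t x y : Prop :=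
  match i with
  | 0 => ex_derive (fun s => f s x y) t
  | 1 => ex_derive (fun s => f t s y) x
  | _ => ex_derive (fun s => f t x s) y end.

Fixpoint Sn (n : nat) (f : field) : Prop :=
  match n with
  | 0 => cont f
  | S n => cont f /\ (forall i t x y, exp_ i f t x y) /\ (forall i, Sn n (partial i f))
  end.

Definition Sm (f : field) := forall n, Sn n f.

Lemma Sn_cont n f : Sn n f -> cont f.
Proof. destruct n; simpl; tauto. Qed.

Lemma Sn_mono n f : Sn (S n) f -> Sn n f.
Proof.
  revert f; induction n; intros f H.
  - exact (Sn_cont _ _ H).
  - destruct H as [H1 [H2 H3]]. split; [exact H1|split; [exact H2|]].
    intro i; apply IHn, H3.
Qed.

Lemma smooth_partial i f : smooth f -> smooth (partial i f).
Proof.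
  intros H l t x y. specialize (H (l ++ i :: nil) t x y).
  rewrite fold_right_app in H. exact H.
Qed.

Lemma smooth_Sm f : smooth f -> Sm f.
Proof.
  intros H n; revert f H; induction n; intros f H.
  - intros t x y. exact (proj2 (proj2 (proj2 (H nil t x y)))).
  - split; [intros t x y; exact (proj2 (proj2 (proj2 (H nil t x y))))|split].
    + intros [|[|i]] t x y; simpl; apply (H nil t x y).
    + intro i. apply IHn, smooth_partial, H.
Qed.

Lemma Sm_partial i f : Sm f -> Sm (partial i f).
Proof. intros H n. exact (proj2 (proj2 (H (S n))) i). Qed.
Lemma Sm_dt f : Sm f -> Sm (dt f). Proof. exact (Sm_partial 0 f). Qed.
Lemma Sm_dx f : Sm f -> Sm (dx f). Proof. exact (Sm_partial 1 f). Qed.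
Lemma Sm_dy f : Sm f -> Sm (dy f). Proof. exact (Sm_partial 2 f). Qed.
Lemma Sm_ex i f : Sm f -> forall t x y, exp_ i f t x y.
Proof. intros H. exact (proj1 (proj2 (H 1%nat)) i). Qed.
Lemma Sm_cont f : Sm f -> cont f.
Proof. intros H. exact (H 0%nat). Qed.

Lemma partial_add i f g : (forall t x y, exp_ i f t x y) -> (forall t x y, exp_ i g t x y) ->
  partial i (fadd f g) = fadd (partial i f) (partial i g).
Proof.
  intros Hf Hg; apply fext; intros t x y.
  pose proof (Hf t x y); pose proof (Hg t x y).
  destruct i as [|[|i]]; unfold fadd; simpl in *; unfold dt, dx, dy.
  - apply (Derive_plus (fun s => f s x y) (fun s => g s x y)); assumption.
  - apply (Derive_plus (fun s => f t s y) (fun s => g t s y)); assumption.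
  - apply (Derive_plus (fun s => f t x s) (fun s => g t x s)); assumption.
Qed.

Lemma partial_mul i f g : (forall t x y, exp_ i f t x y) -> (forall t x y, exp_ i g t x y) ->
  partial i (fmul f g) = fadd (fmul (partial i f) g) (fmul f (partial i g)).
Proof.
  intros Hf Hg; apply fext; intros t x y.
  pose proof (Hf t x y); pose proof (Hg t x y).
  destruct i as [|[|i]]; unfold fadd, fmul; simpl in *; unfold dt, dx, dy.
  - apply (Derive_mult (fun s => f s x y) (fun s => g s x y)); assumption.
  - apply (Derive_mult (fun s => f t s y) (fun s => g t s y)); assumption.
  - apply (Derive_mult (fun s => f t x s) (fun s => g t x s)); assumption.
Qed.

Lemma partial_const i c : partial i (fconst c) = fconst 0.
Proof.
  apply fext; intros t x y.
  destruct i as [|[|i]]; unfold fconst; simpl; unfold dt, dx, dy; apply Derive_const.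
Qed.

Lemma partial_inv i f : (forall t x y, exp_ i f t x y) -> (forall t x y, f t x y <> 0) ->
  partial i (finv f) = fmul (fconst (-1)) (fmul (partial i f) (fmul (finv f) (finv f))).
Proof.
  intros Hf H0; apply fext; intros t x y.
  pose proof (Hf t x y); pose proof (H0 t x y).
  destruct i as [|[|i]]; unfold fmul, fconst, finv; simpl in *; unfold dt, dx, dy.
  - rewrite (Derive_inv (fun s => f s x y)) by assumption. field; assumption.
  - rewrite (Derive_inv (fun s => f t s y)) by assumption. field; assumption.
  - rewrite (Derive_inv (fun s => f t x s)) by assumption. field; assumption.
Qed.

Lemma exp_add i f g : (forall t x y, exp_ i f t x y) -> (forall t x y, exp_ i g t x y) ->
  forall t x y, exp_ i (fadd f g) t x y.
Proof.
  intros Hf Hg t x y; pose proof (Hf t x y); pose proof (Hg t x y).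
  destruct i as [|[|i]]; unfold fadd; simpl in *.
  - apply (ex_derive_plus (fun s => f s x y) (fun s => g s x y)); assumption.
  - apply (ex_derive_plus (fun s => f t s y) (fun s => g t s y)); assumption.
  - apply (ex_derive_plus (fun s => f t x s) (fun s => g t x s)); assumption.
Qed.

Lemma exp_mul i f g : (forall t x y, exp_ i f t x y) -> (forall t x y, exp_ i g t x y) ->
  forall t x y, exp_ i (fmul f g) t x y.
Proof.
  intros Hf Hg t x y; pose proof (Hf t x y); pose proof (Hg t x y).
  destruct i as [|[|i]]; unfold fmul; simpl in *.
  - apply (ex_derive_mult (fun s => f s x y) (fun s => g s x y)); assumption.
  - apply (ex_derive_mult (fun s => f t s y) (fun s => g t s y)); assumption.
  - apply (ex_derive_mult (fun s => f t x s) (fun s => g t x s)); assumption.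
Qed.

Lemma exp_const i c t x y : exp_ i (fconst c) t x y.
Proof. destruct i as [|[|i]]; unfold fconst; simpl; apply ex_derive_const. Qed.

Lemma exp_inv i f : (forall t x y, exp_ i f t x y) -> (forall t x y, f t x y <> 0) ->
  forall t x y, exp_ i (finv f) t x y.
Proof.
  intros Hf H0 t x y; pose proof (Hf t x y); pose proof (H0 t x y).
  destruct i as [|[|i]]; unfold finv; simpl in *.
  - apply (ex_derive_inv (fun s => f s x y)); assumption.
  - apply (ex_derive_inv (fun s => f t s y)); assumption.
  - apply (ex_derive_inv (fun s => f t x s)); assumption.
Qed.

Lemma cont_add f g : cont f -> cont g -> cont (fadd f g).
Proof.
  intros Hf Hg t x y. unfold fadd.
  apply (@continuous_plus _ R_AbsRing R_NormedModule); [apply Hf|apply Hg].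
Qed.
Lemma cont_mul f g : cont f -> cont g -> cont (fmul f g).
Proof.
  intros Hf Hg t x y. unfold fmul.
  apply (@continuous_mult _ R_AbsRing); [apply Hf|apply Hg].
Qed.
Lemma cont_const c : cont (fconst c).
Proof. intros t x y. unfold fconst. apply continuous_const. Qed.
Lemma cont_inv f : cont f -> (forall t x y, f t x y <> 0) -> cont (finv f).
Proof.
  intros Hf H0 t x y. unfold finv.
  apply (continuous_comp (fun z : R*R*R => f (fst (fst z)) (snd (fst z)) (snd z)) Rinv).
  apply Hf. apply continuous_Rinv. apply H0.
Qed.

Lemma Sn_const n c : Sn n (fconst c).
Proof.
  revert c; induction n; intro c; simpl.
  - apply cont_const.
  - split; [apply cont_const|split; [intros; apply exp_const|]].
    intro i; rewrite partial_const; apply IHn.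
Qed.

Lemma Sn_add n : forall f g, Sn n f -> Sn n g -> Sn n (fadd f g).
Proof.
  induction n; intros f g Hf Hg.
  - apply cont_add; assumption.
  - destruct Hf as [Cf [Ef Pf]]; destruct Hg as [Cg [Eg Pg]].
    split; [apply cont_add; assumption|split].
    + intro i; apply exp_add; [apply Ef|apply Eg].
    + intro i; rewrite partial_add by (apply Ef || apply Eg). apply IHn; auto.
Qed.

Lemma Sn_mul n : forall f g, Sn n f -> Sn n g -> Sn n (fmul f g).
Proof.
  induction n; intros f g Hf Hg.
  - apply cont_mul; assumption.
  - pose proof (Sn_mono _ _ Hf) as Hf'; pose proof (Sn_mono _ _ Hg) as Hg'.
    destruct Hf as [Cf [Ef Pf]]; destruct Hg as [Cg [Eg Pg]].
    split; [apply cont_mul; assumption|split].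
    + intro i; apply exp_mul; [apply Ef|apply Eg].
    + intro i; rewrite partial_mul by (apply Ef || apply Eg).
      apply Sn_add; apply IHn; auto.
Qed.

Lemma Sn_inv n : forall f, (forall t x y, f t x y <> 0) -> Sn n f -> Sn n (finv f).
Proof.
  induction n; intros f H0 Hf.
  - apply cont_inv; assumption.
  - pose proof (Sn_mono _ _ Hf) as Hf'.
    destruct Hf as [Cf [Ef Pf]].
    split; [apply cont_inv; assumption|split].
    + intro i; apply exp_inv; [apply Ef|exact H0].
    + intro i; rewrite partial_inv by (apply Ef || exact H0).
      apply Sn_mul; [apply Sn_const|]. apply Sn_mul; [apply Pf|].
      apply Sn_mul; apply IHn; auto.
Qed.

Lemma Sm_add f g : Sm f -> Sm g -> Sm (fadd f g).
Proof. intros Hf Hg n; apply Sn_add; auto. Qed.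
Lemma Sm_mul f g : Sm f -> Sm g -> Sm (fmul f g).
Proof. intros Hf Hg n; apply Sn_mul; auto. Qed.
Lemma Sm_const c : Sm (fconst c).
Proof. intros n; apply Sn_const. Qed.
Lemma Sm_inv f : (forall t x y, f t x y <> 0) -> Sm f -> Sm (finv f).
Proof. intros H0 Hf n; apply Sn_inv; auto. Qed.
Lemma fsub_eq f g : fsub f g = fadd f (fmul (fconst (-1)) g).
Proof. apply fext; intros; unfold fsub, fadd, fmul, fconst; ring. Qed.
Lemma fopp_eq f : fopp f = fmul (fconst (-1)) f.
Proof. apply fext; intros; unfold fopp, fmul, fconst; ring. Qed.
Lemma Sm_sub f g : Sm f -> Sm g -> Sm (fsub f g).
Proof. intros; rewrite fsub_eq; apply Sm_add; auto; apply Sm_mul; auto; apply Sm_const. Qed.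
Lemma Sm_opp f : Sm f -> Sm (fopp f).
Proof. intros; rewrite fopp_eq; apply Sm_mul; auto; apply Sm_const. Qed.

Lemma d_add i f g : Sm f -> Sm g -> partial i (fadd f g) = fadd (partial i f) (partial i g).
Proof. intros; apply partial_add; apply Sm_ex; auto. Qed.
Lemma d_mul i f g : Sm f -> Sm g -> partial i (fmul f g) = fadd (fmul (partial i f) g) (fmul f (partial i g)).
Proof. intros; apply partial_mul; apply Sm_ex; auto. Qed.
Lemma d_sub i f g : Sm f -> Sm g -> partial i (fsub f g) = fsub (partial i f) (partial i g).
Proof.
  intros. rewrite !fsub_eq, d_add, d_mul, partial_const; auto using Sm_mul, Sm_const.
  apply fext; intros; unfold fadd, fmul, fconst; ring.
Qed.
Lemma d_opp i f : Sm f -> partial i (fopp f) = fopp (partial i f).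
Proof.
  intros. rewrite !fopp_eq, d_mul, partial_const; auto using Sm_const.
  apply fext; intros; unfold fadd, fmul, fconst; ring.
Qed.

Lemma dt_add f g : Sm f -> Sm g -> dt (fadd f g) = fadd (dt f) (dt g). Proof. exact (d_add 0 f g). Qed.
Lemma dx_add f g : Sm f -> Sm g -> dx (fadd f g) = fadd (dx f) (dx g). Proof. exact (d_add 1 f g). Qed.
Lemma dy_add f g : Sm f -> Sm g -> dy (fadd f g) = fadd (dy f) (dy g). Proof. exact (d_add 2 f g). Qed.
Lemma dt_sub f g : Sm f -> Sm g -> dt (fsub f g) = fsub (dt f) (dt g). Proof. exact (d_sub 0 f g). Qed.
Lemma dx_sub f g : Sm f -> Sm g -> dx (fsub f g) = fsub (dx f) (dx g). Proof. exact (d_sub 1 f g). Qed.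
Lemma dy_sub f g : Sm f -> Sm g -> dy (fsub f g) = fsub (dy f) (dy g). Proof. exact (d_sub 2 f g). Qed.
Lemma dt_mul f g : Sm f -> Sm g -> dt (fmul f g) = fadd (fmul (dt f) g) (fmul f (dt g)). Proof. exact (d_mul 0 f g). Qed.
Lemma dx_mul f g : Sm f -> Sm g -> dx (fmul f g) = fadd (fmul (dx f) g) (fmul f (dx g)). Proof. exact (d_mul 1 f g). Qed.
Lemma dy_mul f g : Sm f -> Sm g -> dy (fmul f g) = fadd (fmul (dy f) g) (fmul f (dy g)). Proof. exact (d_mul 2 f g). Qed.
Lemma dx_opp f : Sm f -> dx (fopp f) = fopp (dx f). Proof. exact (d_opp 1 f). Qed.
Lemma dy_opp f : Sm f -> dy (fopp f) = fopp (dy f). Proof. exact (d_opp 2 f). Qed.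
Lemma dx_const c : dx (fconst c) = fconst 0. Proof. exact (partial_const 1 c). Qed.
Lemma dy_const c : dy (fconst c) = fconst 0. Proof. exact (partial_const 2 c). Qed.

Lemma cont_pair {U V W : UniformSpace} (f : U -> V) (g : U -> W) x :
  continuous f x -> continuous g x -> continuous (fun z => (f z, g z)) x.
Proof.
  intros Hf Hg. apply (continuous_comp_2 f g (fun a b => (a, b))); auto.
  eapply continuous_ext; [|apply continuous_id]. intros [a b]; reflexivity.
Qed.

Lemma schwarz2 (F : R -> R -> R) x y :
  (forall u v, ex_derive (fun z => F z v) u) ->
  (forall u v, ex_derive (fun z => F u z) v) ->
  (forall u v, ex_derive (fun z => Derive (fun s => F z s) v) u) ->
  (forall u v, ex_derive (fun z => Derive (fun s => F s z) u) v) ->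
  continuous (fun w : R * R => Derive (fun z => Derive (fun s => F z s) (snd w)) (fst w)) (x, y) ->
  continuous (fun w : R * R => Derive (fun z => Derive (fun s => F s z) (fst w)) (snd w)) (x, y) ->
  Derive (fun z => Derive (fun s => F z s) y) x = Derive (fun z => Derive (fun s => F s z) x) y.
Proof.
  intros H1 H2 H3 H4 C1 C2. apply Schwarz.
  - exists (mkposreal 1 Rlt_0_1). intros; auto.
  - apply continuity_2d_pt_filterlim. exact C1.
  - apply continuity_2d_pt_filterlim. exact C2.
Qed.

Lemma slice_xy f t x y : cont f -> continuous (fun w : R * R => f t (fst w) (snd w)) (x, y).
Proof.
  intros H.
  apply (continuous_comp (fun w : R * R => ((t, fst w), snd w))
          (fun z : R * R * R => f (fst (fst z)) (snd (fst z)) (snd z))).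
  - apply cont_pair; [apply cont_pair; [apply continuous_const|apply continuous_fst]|apply continuous_snd].
  - apply H.
Qed.
Lemma slice_tx f t x y : cont f -> continuous (fun w : R * R => f (fst w) (snd w) y) (t, x).
Proof.
  intros H.
  apply (continuous_comp (fun w : R * R => ((fst w, snd w), y))
          (fun z : R * R * R => f (fst (fst z)) (snd (fst z)) (snd z))).
  - apply cont_pair; [apply cont_pair; [apply continuous_fst|apply continuous_snd]|apply continuous_const].
  - apply H.
Qed.
Lemma slice_ty f t x y : cont f -> continuous (fun w : R * R => f (fst w) x (snd w)) (t, y).
Proof.
  intros H.
  apply (continuous_comp (fun w : R * R => ((fst w, x), snd w))
          (fun z : R * R * R => f (fst (fst z)) (snd (fst z)) (snd z))).
  - apply cont_pair; [apply cont_pair; [apply continuous_fst|apply continuous_const]|apply continuous_snd].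
  - apply H.
Qed.

Lemma dyx f : Sm f -> dy (dx f) = dx (dy f).
Proof.
  intros H. apply fext; intros t x y. symmetry.
  apply (schwarz2 (fun u v => f t u v) x y).
  - intros u v; exact (Sm_ex 1 f H t u v).
  - intros u v; exact (Sm_ex 2 f H t u v).
  - intros u v; exact (Sm_ex 1 _ (Sm_dy f H) t u v).
  - intros u v; exact (Sm_ex 2 _ (Sm_dx f H) t u v).
  - exact (slice_xy (dx (dy f)) t x y (Sm_cont _ (Sm_dx _ (Sm_dy f H)))).
  - exact (slice_xy (dy (dx f)) t x y (Sm_cont _ (Sm_dy _ (Sm_dx f H)))).
Qed.

Lemma dtx f : Sm f -> dt (dx f) = dx (dt f).
Proof.
  intros H. apply fext; intros t x y.
  apply (schwarz2 (fun u v => f u v y) t x).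
  - intros u v; exact (Sm_ex 0 f H u v y).
  - intros u v; exact (Sm_ex 1 f H u v y).
  - intros u v; exact (Sm_ex 0 _ (Sm_dx f H) u v y).
  - intros u v; exact (Sm_ex 1 _ (Sm_dt f H) u v y).
  - exact (slice_tx (dt (dx f)) t x y (Sm_cont _ (Sm_dt _ (Sm_dx f H)))).
  - exact (slice_tx (dx (dt f)) t x y (Sm_cont _ (Sm_dx _ (Sm_dt f H)))).
Qed.

Lemma dty f : Sm f -> dt (dy f) = dy (dt f).
Proof.
  intros H. apply fext; intros t x y.
  apply (schwarz2 (fun u v => f u x v) t y).
  - intros u v; exact (Sm_ex 0 f H u x v).
  - intros u v; exact (Sm_ex 2 f H u x v).
  - intros u v; exact (Sm_ex 0 _ (Sm_dy f H) u x v).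
  - intros u v; exact (Sm_ex 2 _ (Sm_dt f H) u x v).
  - exact (slice_ty (dt (dy f)) t x y (Sm_cont _ (Sm_dt _ (Sm_dy f H)))).
  - exact (slice_ty (dy (dt f)) t x y (Sm_cont _ (Sm_dy _ (Sm_dt f H)))).
Qed.

Lemma lie1_x_eq v1 v2 a1 a2 : lie1_x v1 v2 a1 a2 =
  fadd (fadd (fadd (fmul v1 (dx a1)) (fmul v2 (dy a1))) (fmul a1 (dx v1))) (fmul a2 (dx v2)).
Proof. reflexivity. Qed.
Lemma lie1_y_eq v1 v2 a1 a2 : lie1_y v1 v2 a1 a2 =
  fadd (fadd (fadd (fmul v1 (dx a2)) (fmul v2 (dy a2))) (fmul a1 (dy v1))) (fmul a2 (dy v2)).
Proof. reflexivity. Qed.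

Create HintDb sm.
#[export] Hint Resolve Sm_add Sm_sub Sm_mul Sm_const Sm_dt Sm_dx Sm_dy Sm_opp : sm.

Ltac solveS := auto 40 with sm.
Ltac norm := repeat first
  [ rewrite dt_add by solveS | rewrite dx_add by solveS | rewrite dy_add by solveS
  | rewrite dt_sub by solveS | rewrite dx_sub by solveS | rewrite dy_sub by solveS
  | rewrite dt_mul by solveS | rewrite dx_mul by solveS | rewrite dy_mul by solveS
  | rewrite dx_opp by solveS | rewrite dy_opp by solveS
  | rewrite dx_const | rewrite dy_const
  | rewrite dyx by solveS | rewrite dtx by solveS | rewrite dty by solveS ].

Theorem mainTheorem6
  (g eps : R)
  (v1 v2 D rho p zeta what psi : field)
  (* regularity *)
  (Hv1 : smooth v1) (Hv2 : smooth v2) (Hrho : smooth rho) (Hp : smooth p)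
  (Hzeta : smooth zeta) (Hwhat : smooth what) (Hpsi : smooth psi)
  (Hrho0 : forall t x y, rho t x y <> 0)
  (Hden : forall t x y, 1 + eps * (dx zeta t x y ^ 2 + dy zeta t x y ^ 2) <> 0) :
  (* auxiliary quantities *)
  let wtil : field := fun t x y =>
      what t x y / (1 + eps * (dx zeta t x y ^ 2 + dy zeta t x y ^ 2)) in
  let varpi : field := fun t x y =>
      / 2 * (v1 t x y ^ 2 + v2 t x y ^ 2 + what t x y ^ 2) - g * zeta t x y in
  let mutil : field := fun t x y => D t x y * rho t x y * wtil t x y in
  let rinv : field := fun t x y => / rho t x y in
  (* the 1-form  vhat . dx + wtil dzeta  has components a1, a2 *)
  let a1 : field := fun t x y => v1 t x y + wtil t x y * dx zeta t x y in
  let a2 : field := fun t x y => v2 t x y + wtil t x y * dy zeta t x y in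
  (* WCIFS equations *)
  (forall t x y, D t x y = 1) ->
  (forall t x y, dt a1 t x y + lie1_x v1 v2 a1 a2 t x y
                 = dx varpi t x y - / rho t x y * dx p t x y) ->
  (forall t x y, dt a2 t x y + lie1_y v1 v2 a1 a2 t x y
                 = dy varpi t x y - / rho t x y * dy p t x y) ->
  (forall t x y, dt D t x y + div2 (fmul D v1) (fmul D v2) t x y = 0) ->
  (forall t x y, dt rho t x y + v1 t x y * dx rho t x y + v2 t x y * dy rho t x y = 0) ->
  (forall t x y, dt zeta t x y + v1 t x y * dx zeta t x y + v2 t x y * dy zeta t x y
                 = what t x y * (1 + eps * (dx zeta t x y ^ 2 + dy zeta t x y ^ 2))) ->
  (forall t x y, dt wtil t x y + v1 t x y * dx wtil t x y + v2 t x y * dy wtil t x y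
                 = - g + 2 * eps / (D t x y * rho t x y)
                     * div2 (fun t x y => what t x y * mutil t x y * dx zeta t x y)
                            (fun t x y => what t x y * mutil t x y * dy zeta t x y) t x y) ->
  (* stream function: vhat = zhat x grad psi *)
  (forall t x y, v1 t x y = - dy psi t x y) ->
  (forall t x y, v2 t x y = dx psi t x y) ->
  (* conclusion 1: (d_t + L_vhat)((curl vhat + grad wtil x grad zeta) . dS)
                    = - grad rho^-1 x grad p . dS *)
  (forall t x y,
      dt (fadd (curl2 v1 v2) (jac wtil zeta)) t x y
      + lie2 v1 v2 (fadd (curl2 v1 v2) (jac wtil zeta)) t x y
      = - jac rinv p t x y)
  /\
  (* conclusion 2: d_t q + J(psi, q) = - J(rho^-1, p),  q = Lap psi + J(wtil, zeta) *)
  (let q : field := fadd (lap psi) (jac wtil zeta) in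
   forall t x y, dt q t x y + jac psi q t x y = - jac rinv p t x y).
Proof.
  intros wtil varpi mutil rinv a1 a2 HD H1 H2 _ _ _ _ Hp1 Hp2.
  apply smooth_Sm in Hv1, Hv2, Hrho, Hp, Hzeta, Hwhat, Hpsi.
  set (den := fadd (fconst 1) (fmul (fconst eps)
                (fadd (fmul (dx zeta) (dx zeta)) (fmul (dy zeta) (dy zeta))))).
  assert (Hden' : forall t x y, den t x y <> 0).
  { intros t x y. unfold den, fadd, fmul, fconst.
    replace (dx zeta t x y * dx zeta t x y + dy zeta t x y * dy zeta t x y)
      with (dx zeta t x y ^ 2 + dy zeta t x y ^ 2) by ring. apply Hden. }
  assert (Sden : Sm den) by (unfold den; solveS).
  assert (Ewtil : wtil = fmul what (finv den)).
  { apply fext; intros t x y. unfold wtil, fmul, finv, den, fadd, fconst, fmul, Rdiv.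
    f_equal. f_equal. ring. }
  assert (Swtil : Sm wtil) by (rewrite Ewtil; apply Sm_mul; [assumption|apply Sm_inv; assumption]).
  assert (Ea1 : a1 = fadd v1 (fmul wtil (dx zeta))) by reflexivity.
  assert (Ea2 : a2 = fadd v2 (fmul wtil (dy zeta))) by reflexivity.
  assert (Sa1 : Sm a1) by (rewrite Ea1; solveS).
  assert (Sa2 : Sm a2) by (rewrite Ea2; solveS).
  assert (Evarpi : varpi = fadd (fmul (fconst (/2)) (fadd (fadd (fmul v1 v1) (fmul v2 v2)) (fmul what what)))
                              (fmul (fconst (-g)) zeta)).
  { apply fext; intros t x y. unfold varpi, fadd, fmul, fconst. ring. }
  assert (Svarpi : Sm varpi) by (rewrite Evarpi; solveS).
  assert (Erinv : rinv = finv rho) by reflexivity.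
  assert (Srinv : Sm (finv rho)) by (apply Sm_inv; assumption).
  assert (E1 : dt a1 = fsub (fsub (dx varpi) (fmul (finv rho) (dx p))) (lie1_x v1 v2 a1 a2)).
  { apply fext; intros t x y. specialize (H1 t x y). unfold fsub, fmul, finv. lra. }
  assert (E2 : dt a2 = fsub (fsub (dy varpi) (fmul (finv rho) (dy p))) (lie1_y v1 v2 a1 a2)).
  { apply fext; intros t x y. specialize (H2 t x y). unfold fsub, fmul, finv. lra. }
  clear H1 H2. clearbody a1 a2. clearbody wtil varpi rinv. subst rinv. clear mutil.
  assert (I1 : fadd (curl2 v1 v2) (jac wtil zeta) = fsub (dx a2) (dy a1)).
  { rewrite Ea1, Ea2.
    change (curl2 v1 v2) with (fsub (dx v2) (dy v1)).
    change (jac wtil zeta) with (fsub (fmul (dx wtil) (dy zeta)) (fmul (dy wtil) (dx zeta))).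
    norm. apply fext; intros; unfold fadd, fsub, fmul; ring. }
  assert (C1 : forall t x y,
      dt (fadd (curl2 v1 v2) (jac wtil zeta)) t x y
      + lie2 v1 v2 (fadd (curl2 v1 v2) (jac wtil zeta)) t x y
      = - jac (finv rho) p t x y).
  { intros t x y. rewrite I1. unfold lie2.
    rewrite dt_sub by solveS. rewrite dtx, dty by solveS.
    rewrite E1, E2, lie1_x_eq, lie1_y_eq. unfold jac.
    norm. unfold fadd, fsub, fmul, finv, fconst. ring. }
  split; [exact C1|].
  intros q t x y.
  assert (Ev1 : v1 = fopp (dy psi)) by (apply fext; intros; apply Hp1).
  assert (Ev2 : v2 = dx psi) by (apply fext; intros; apply Hp2).
  assert (Eq : q = fadd (curl2 v1 v2) (jac wtil zeta)).
  { unfold q. f_equal. change (curl2 v1 v2) with (fsub (dx v2) (dy v1)).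
    rewrite Ev1, Ev2, dy_opp by solveS. apply fext; intros; unfold lap, fsub, fopp. ring. }
  assert (Hdiv : forall t x y, dy v2 t x y = - dx v1 t x y).
  { intros t' x' y'. rewrite Ev1, Ev2, dx_opp, dyx by solveS. unfold fopp. ring. }
  clearbody q. subst q.
  rewrite <- (C1 t x y). f_equal.
  assert (SW : Sm (fadd (curl2 v1 v2) (jac wtil zeta))) by (rewrite I1; solveS).
  revert SW. generalize (fadd (curl2 v1 v2) (jac wtil zeta)). intros W SW.
  unfold lie2, jac. rewrite dx_mul, dy_mul by solveS. unfold fadd, fmul.
  rewrite Hdiv, Hp1, Hp2. ring.
Qed.
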